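(* Let $n\ge2$. Then $$S_{NC}^\delta(n,-n)=\bigcup_{\pi\in NC(n)}\ \bigcup_{V\in\pi} S_{NC}^\delta(n,-n)_{\pi,V},$$ and this union is disjoint.
   Context: $[\pm n]=\{\pm1,\dots,\pm n\}$; permutations of $\{1,\dots,n\}$ are regarded as permutations of $[\pm n]$ fixing $-1,\dots,-n$. $\delta$ is the permutation $\delta(k)=-k$, $\gamma_n=(1,2,\dots,n)$, so $\gamma_n\delta\gamma_n^{-1}\delta=(1,\dots,n)(-n,\dots,-1)$. For a permutation $\sigma$, $\#(\sigma)$ is its number of cycles (including fixed points). $S_{NC}^\delta(n,-n)$ is the set of permutations $\sigma$ of $[\pm n]$ such that: the subgroup generated by $\sigma$ and $\gamma_n\delta\gamma_n^{-1}\delta$ acts transitively on $[\pm n]$; $\#(\sigma)+\#(\sigma^{-1}\gamma_n\delta\gamma_n^{-1}\delta)=2n$; and $\sigma\delta$ is a pairing (an involution without fixed points). A cycle of $\sigma$ is a through cycle if it meets both $\{1,\dots,n\}$ and $\{-1,\dots,-n\}$. $NC(n)$ is the set of non-crossing partitions of $\{1,\dots,n\}$; each $\pi\in NC(n)$ is regarded as the permutation whose cycles are its blocks, each in increasing order. For $\pi\in NC(n)$ and a block $V\in\pi$, $S_{NC}^\delta(n,-n)_{\pi,V}$ is the set of $\sigma\in S_{NC}^\delta(n,-n)$ such that every cycle of $\sigma$ is either a cycle of $\pi\delta\pi^{-1}\delta$ or contained in $V\cup\delta(V)$, and every cycle of $\sigma$ contained in $V\cup\delta(V)$ is a through cycle.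 *)

(* Defs.v *)
From HB Require Import structures.
From mathcomp Require Import all_boot all_order all_fingroup.
Set Implicit Arguments. Unset Strict Implicit. Unset Printing Implicit Defensive.

(* [±n] is encoded as the finite type  bool * 'I_n :
   (false, i) stands for  i+1   and   (true, i) stands for  -(i+1). *)
Notation PM n := (bool * 'I_n)%type.

(* Composition in the paper's (right-to-left) convention:
   pcomp a b = a ∘ b, i.e. (pcomp a b) x = a (b x).
   (MathComp's (b * a)%g applies b first.) *)
Definition pcomp (T : finType) (a b : {perm T}) : {perm T} := (b * a)%g.

Definition delta_fun n (x : PM n) : PM n := (~~ x.1, x.2).
Lemma delta_fun_inj n : injective (@delta_fun n).
Proof.
by apply: (can_inj (g := @delta_fun n)) => -[b i]; rewrite /delta_fun /= negbK.
Qed.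
Definition delta n : {perm PM n} := perm (@delta_fun_inj n).

Definition lift_pos_fun n (p : {perm 'I_n}) (x : PM n) : PM n :=
  if x.1 then x else (false, p x.2).
Lemma lift_pos_fun_inj n (p : {perm 'I_n}) : injective (lift_pos_fun p).
Proof.
move=> [[] i] [[] j]; rewrite /lift_pos_fun /= => //= -[].
by move/perm_inj => ->.
Qed.
Definition lift_pos n (p : {perm 'I_n}) : {perm PM n} := perm (@lift_pos_fun_inj n p).

Definition gamma_I n : {perm 'I_n} := perm (@ordS_inj n).
Definition gamma n : {perm PM n} := lift_pos (gamma_I n).

(* gamma_n delta gamma_n^{-1} delta = (1,...,n)(-n,...,-1) *)
Definition cgd n : {perm PM n} :=
  pcomp (gamma n) (pcomp (delta n) (pcomp (gamma n)^-1 (delta n))).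

(* #(sigma): number of cycles, including fixed points *)
Definition ncycles (T : finType) (s : {perm T}) : nat := #|porbits s|.

Definition pairing (T : finType) (p : {perm T}) : bool :=
  [forall x, (p (p x) == x) && (p x != x)].

Definition SNC n (s : {perm PM n}) : bool :=
  [&& [transitive <<[set s; cgd n]>>, on [set: PM n] | 'P],
      ncycles s + ncycles (pcomp s^-1 (cgd n)) == 2 * n
    & pairing (pcomp s (delta n))].

Definition through n (C : {set PM n}) : bool :=
  [exists x in C, ~~ x.1] && [exists x in C, x.1].

Definition noncrossing n (P : {set {set 'I_n}}) : bool :=
  [forall a : 'I_n, forall b : 'I_n, forall c : 'I_n, forall d : 'I_n,
     [&& a < b, b < c, c < d, pblock P a == pblock P c & pblock P b == pblock P d]
     ==> (pblock P a == pblock P b)].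
Definition NC n (P : {set {set 'I_n}}) : bool :=
  partition P [set: 'I_n] && noncrossing P.

Definition block_next n (P : {set {set 'I_n}}) (i : 'I_n) : 'I_n :=
  let B := pblock P i in
  if [pick j in B | (i < j) && [forall k in B, (i < k) ==> (j <= k)]] is Some j
  then j
  else odflt i [pick j in B | [forall k in B, j <= k]].

(* Turning an injective function into a permutation (identity if not injective;
   for partitions P, block_next P is always a bijection). *)
Definition mkperm (T : finType) (f : T -> T) : {perm T} :=
  match injectiveP f with
  | ReflectT H => perm H
  | ReflectF _ => 1%g
  end.

(* pi in NC(n) regarded as the permutation whose cycles are its blocks *)
Definition pi_perm n (P : {set {set 'I_n}}) : {perm 'I_n} := mkperm (block_next P).

Definition pdpd n (P : {set {set 'I_n}}) : {perm PM n} :=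
  let p := lift_pos (pi_perm P) in
  pcomp p (pcomp (delta n) (pcomp p^-1 (delta n))).

Definition VdV n (V : {set 'I_n}) : {set PM n} := [set x | x.2 \in V].

(* "the cycle C of s is a cycle of tau": same orbit and s agrees with tau on it *)
Definition cycle_of_other (T : finType) (s tau : {perm T}) (C : {set T}) : bool :=
  (C \in porbits tau) && [forall x in C, s x == tau x].

Definition SNC_piV n (P : {set {set 'I_n}}) (V : {set 'I_n}) (s : {perm PM n}) : bool :=
  [&& SNC s,
      [forall C in porbits s, cycle_of_other s (pdpd P) C || (C \subset VdV V)]
    & [forall C in porbits s, (C \subset VdV V) ==> through C]].

(* Main.v *)
Require Import Defs.
From HB Require Import structures.
From mathcomp Require Import all_boot all_order all_fingroup.
From mathcomp Require Import zify.
Set Implicit Arguments. Unset Strict Implicit. Unset Printing Implicit Defensive.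

Module Aux.
Local Open Scope group_scope.

Section Gen.
Variable T : finType.
Implicit Types s a b : {perm T}.

Definition cnt s := #|porbits s|.

Lemma cnt_mull s x y :
  cnt (tperm x y * s) + (x \notin porbit s y).*2 = cnt s + (x != y).
Proof. exact: porbits_mul_tperm. Qed.

Lemma cnt_mulr s x y :
  cnt (s * tperm x y) + (x \notin porbit s y).*2 = cnt s + (x != y).
Proof.
have := porbits_mul_tperm (s^-1) x y.
rewrite /= porbitsV porbitV.
have -> : tperm x y * s^-1 = (s * tperm x y)^-1 by rewrite invMg tpermV.
by rewrite porbitsV.
Qed.

Lemma cnt_mull_in s x y : x \in porbit s y -> x != y ->
  cnt (tperm x y * s) = (cnt s).+1.
Proof. by move=> h1 h2; have := cnt_mull s x y; rewrite h1 h2 /= addn0 addn1. Qed.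

Lemma cnt_mulr_in s x y : x \in porbit s y -> x != y ->
  cnt (s * tperm x y) = (cnt s).+1.
Proof. by move=> h1 h2; have := cnt_mulr s x y; rewrite h1 h2 /= addn0 addn1. Qed.

Lemma cnt_mulr_out s x y : x \notin porbit s y ->
  (cnt (s * tperm x y)).+1 = cnt s.
Proof.
move=> h1; have := cnt_mulr s x y; rewrite h1 /=.
have -> : x != y by apply: contraNneq h1 => ->; apply: porbit_id.
move=> e; rewrite -addnn in e; lia.
Qed.

Lemma cnt_mulr_ge s x y : cnt s <= (cnt (s * tperm x y)).+1.
Proof.
case: (eqVneq x y) => [->|ne]; first by rewrite tperm1 mulg1.
have := cnt_mulr s x y; rewrite ne.
case: (x \notin _) => e; simpl in e; rewrite ?doubleS ?double0 in e; lia.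
Qed.

Lemma cnt_le s : cnt s <= #|T|.
Proof. exact: leq_imset_card. Qed.

Lemma cnt1 : cnt 1 = #|T|.
Proof.
rewrite /cnt /porbits card_in_imset // => x y _ _ /eqP.
rewrite eq_porbit_mem porbit.unlock cycle1 imset_set1 /aperm perm1 inE.
by move=> /eqP.
Qed.

Lemma split_step b : b != 1 -> exists x,
  b x != x /\ cnt (tperm x (b x) * b) = (cnt b).+1.
Proof.
move=> nb.
have [x hx] : exists x, b x != x.
  apply/existsP; apply: contraR nb => /existsPn H; apply/eqP/permP => z.
  by rewrite perm1; apply/eqP; have := H z; rewrite negbK.
exists x; split => //; apply: cnt_mull_in; last by rewrite eq_sym.
by rewrite porbit_sym; have := mem_porbit b 1 x; rewrite expg1.
Qed.

Lemma tri_aux k : forall a b, #|T| - cnt b <= k ->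
  cnt a + cnt b <= cnt (a * b) + #|T|.
Proof.
elim: k => [|k IH] a b hk.
  case: (eqVneq b 1) => [->|nb].
    by rewrite mulg1 leq_add2l cnt_le.
  have [x [hx e]] := split_step nb.
  have := cnt_le (tperm x (b x) * b); have := cnt_le b; lia.
case: (eqVneq b 1) => [->|nb].
  by rewrite mulg1 leq_add2l cnt_le.
have [x [hx e1]] := split_step nb.
pose t : {perm T} := tperm x (b x).
have e2 := cnt_mulr_ge a x (b x).
rewrite -/t in e1 e2.
have hb : b = t * (t * b) by rewrite mulgA tperm2 mul1g.
have H : #|T| - cnt (t * b) <= k ->
    cnt (a * t) + cnt (t * b) <= cnt (a * b) + #|T|.
  have -> : a * b = (a * t) * (t * b) by rewrite -mulgA -hb.
  exact: IH.
have := cnt_le (t * b).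
have : #|T| - cnt (t * b) <= k by lia.
move=> /H; lia.
Qed.

Lemma tri a b : cnt a + cnt b <= cnt (a * b) + #|T|.
Proof. exact: (@tri_aux (#|T| - cnt b)). Qed.

Lemma it_per s x : (s ^+ #|porbit s x|) x = x.
Proof. by rewrite permX iter_porbit. Qed.

Lemma it_inj s x i j : i < #|porbit s x| -> j < #|porbit s x| ->
  (s ^+ i) x = (s ^+ j) x -> i = j.
Proof.
move=> hi hj; rewrite !permX => e.
have U := uniq_traject_porbit s x.
have := nth_uniq x _ _ U; rewrite size_traject => /(_ i j hi hj).
by rewrite !nth_traject // e eqxx => /esym/eqP.
Qed.

Lemma it_sur s x y : y \in porbit s x ->
  exists2 i, i < #|porbit s x| & y = (s ^+ i) x.
Proof.
rewrite porbit_traject => /trajectP [i hi ->]; exists i => //.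
by rewrite permX.
Qed.


Lemma arc_iter s x m : 0 < m ->
  (forall i, 0 < i < m -> (s ^+ i) x != x /\ (s ^+ i) x != (s ^+ m) x) ->
  forall i, i <= m ->
  ((s * tperm x ((s ^+ m) x)) ^+ i) x = if i < m then (s ^+ i) x else x.
Proof.
move=> m0 hd; elim=> [|i IH] hi; first by rewrite m0 !expg0 perm1.
rewrite expgSr permM IH; last by apply: ltnW.
rewrite hi permM; have -> : s ((s ^+ i) x) = (s ^+ i.+1) x by rewrite expgSr permM.
case: ltnP => hl.
  have [h1 h2] := hd i.+1 hl.
  by rewrite tpermD // eq_sym.
have -> : i.+1 = m by apply/eqP; rewrite eqn_leq hi hl.
by rewrite tpermR.
Qed.

Lemma per_mod (g : {perm T}) x m : (g ^+ m) x = x -> forall i, (g ^+ i) x = (g ^+ (i %% m)) x.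
Proof.
move=> hm i; rewrite {1}(divn_eq i m) expgD permM mulnC expgM.
suff -> : ((g ^+ m) ^+ (i %/ m)) x = x by [].
elim: (i %/ m) => [|q IH]; first by rewrite expg0 perm1.
by rewrite expgSr permM IH hm.
Qed.

Lemma full_in (c : {perm T}) x y : #|porbit c x| = #|T| -> y \in porbit c x.
Proof.
move=> h; suff -> : porbit c x = setT by rewrite inE.
by apply/eqP; rewrite eqEcard subsetT cardsT h leqnn.
Qed.

Lemma core (c sg : {perm T}) x m j k :
  #|porbit c x| = #|T| -> j < m -> m <= k -> k < #|T| ->
  cnt sg + cnt (c * sg^-1) = (#|T|).+1 ->
  cnt (sg * tperm x ((c ^+ m) x) * tperm ((c ^+ j) x) ((c ^+ k) x)) = (cnt sg).+2 ->
  False.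
Proof.
move=> hfull hjm hmk hkN hg hb.
have m0 : 0 < m by apply: leq_ltn_trans hjm.
have hmN : m < #|T| by apply: leq_ltn_trans hkN.
have inj i i' : i < #|T| -> i' < #|T| -> (c ^+ i) x = (c ^+ i') x -> i = i'.
  by rewrite -hfull; apply: it_inj.
have hd : forall i, 0 < i < m -> (c ^+ i) x != x /\ (c ^+ i) x != (c ^+ m) x.
  move=> i /andP [i0 im]; have iN : i < #|T| by apply: ltn_trans hmN.
  split; apply/eqP => e.
    by have := inj i 0 iN (leq_ltn_trans (leq0n _) hmN); rewrite expg0 perm1 => /(_ e) ie; rewrite ie in i0.
  by have := inj i m iN hmN e => ie; rewrite ie ltnn in im.
pose t1 := tperm x ((c ^+ m) x).
have hc1 : cnt c = 1%N.
  rewrite /cnt /porbits.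
  have -> : porbit c @: T = [set porbit c x].
    apply/setP => B; rewrite inE; apply/imsetP/eqP => [[w _ ->]|->].
      by apply/eqP; rewrite eq_porbit_mem full_in.
    by exists x.
  by rewrite cards1.
have hct1 : cnt (c * t1) = 2%N.
  rewrite /t1 cnt_mulr_in ?hc1 //; first by rewrite porbit_sym full_in.
  apply/eqP => e.
  by have := inj 0 m (leq_ltn_trans (leq0n _) hmN) hmN; rewrite expg0 perm1 => /(_ e) e'; rewrite -e' in m0.
have hai := arc_iter m0 hd.
have nin : (c ^+ j) x \notin porbit (c * t1) ((c ^+ k) x).
  apply/negP; rewrite porbit_sym => hin.
  have hj : (c ^+ j) x \in porbit (c * t1) x.
    by have := hai j (ltnW hjm); rewrite hjm => <-; apply: mem_porbit.
  move: hin.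
  have -> : porbit (c * t1) ((c ^+ j) x) = porbit (c * t1) x.
    by apply/eqP; rewrite eq_porbit_mem.
  case/porbitP => i.
  have hper : ((c * t1) ^+ m) x = x by rewrite /t1 hai // ltnn.
  rewrite (per_mod hper i) /t1 hai; last by apply: ltnW; rewrite ltn_mod.
  rewrite ltn_mod m0 => /esym e.
  have := inj _ _ (ltn_trans (ltn_pmod i m0) hmN) hkN e => ek.
  by move: hmk; rewrite -ek leqNgt ltn_pmod.
have hct2 := cnt_mulr_out nin.
rewrite -/t1 hct1 in hct2.
have := tri (c * sg^-1) (sg * t1 * tperm ((c ^+ j) x) ((c ^+ k) x)).
rewrite -/t1 in hb; rewrite hb.
have -> : c * sg^-1 * (sg * t1 * tperm ((c ^+ j) x) ((c ^+ k) x))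
          = c * t1 * tperm ((c ^+ j) x) ((c ^+ k) x).
  by rewrite !mulgA mulgKV.
lia.
Qed.

Lemma fix_orbit (sg : {perm T}) x z : sg x = x -> z \in porbit sg x -> z = x.
Proof.
move=> hx /porbitP [i ->]; elim: i => [|i IH]; first by rewrite expg0 perm1.
by rewrite expgSr permM IH hx.
Qed.

Lemma iter_shift (c : {perm T}) o p r : (c ^+ r) ((c ^+ p) o) = (c ^+ (p + r)) o.
Proof. by rewrite expgD permM. Qed.

Lemma patA (c sg : {perm T}) o x z px py pz :
  #|porbit c o| = #|T| ->
  cnt sg + cnt (c * sg^-1) = (#|T|).+1 ->
  x = (c ^+ px) o -> sg x = (c ^+ py) o -> z = (c ^+ pz) o ->
  px < #|T| -> py < #|T| -> pz < #|T| ->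
  z \in porbit sg x -> z != x -> z != sg x ->
  [|| (px < pz) && (pz < py), (py < px) && (px < pz) | (pz < py) && (py < px)] ->
  False.
Proof.
move=> hfull hg ex ey ez hpx hpy hpz zin zx zy hcase.
set y := sg x in ey zy.
have xy : x != y.
  apply/eqP => e; move/eqP: zx; apply; apply: fix_orbit zin; exact: (esym e).
have hN q : (c ^+ (#|T| + q)) o = (c ^+ q) o.
  by rewrite -iter_shift -{1}hfull it_per.
have c1 : cnt (sg * tperm x y) = (cnt sg).+1.
  apply: cnt_mulr_in xy; rewrite porbit_sym.
  by have := mem_porbit sg 1 x; rewrite expg1.
set L := #|porbit sg y|.
have yin : x \in porbit sg y by rewrite porbit_sym; have := mem_porbit sg 1 x; rewrite expg1.
have L2 : 1 < L.
  have [i hi ei] := it_sur yin.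
  rewrite ltnNge; apply/negP => hL.
  have i0 : i = 0 by move: hi hL; rewrite /L; lia.
  by move: xy; rewrite ei i0 expg0 perm1 eqxx.
have eLx : (sg ^+ L.-1) y = x.
  apply: (@perm_inj _ sg); rewrite -permM -expgSr prednK; last by lia.
  by rewrite it_per.
have hd : forall i, 0 < i < L.-1 -> (sg ^+ i) y != y /\ (sg ^+ i) y != (sg ^+ L.-1) y.
  move=> i /andP [i0 iL].
  have iL' : i < L by lia.
  have LL : L.-1 < L by lia.
  have L0 : 0 < L by lia.
  split; apply/eqP => e.
    have := @it_inj sg y i 0 iL' L0; rewrite expg0 perm1 => /(_ e); lia.
  have := @it_inj sg y i L.-1 iL' LL e; lia.
have L1 : 0 < L.-1 by lia.
have hai := arc_iter L1 hd.
have zin' : z \in porbit (sg * tperm x y) y.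
  have zy' : z \in porbit sg y.
    have -> : porbit sg y = porbit sg x by apply/eqP; rewrite eq_porbit_mem porbit_sym.
    done.
  have [i hi ei] := it_sur zy'.
  have iL : i < L.-1.
    rewrite ltn_neqAle -ltnS prednK; last by lia.
    rewrite hi andbT; apply/eqP => e; move: zx; by rewrite ei e eLx eqxx.
  have := hai i (ltnW iL); rewrite iL -ei eLx tpermC => <-; apply: mem_porbit.
have c2 : cnt (sg * tperm x y * tperm z y) = (cnt sg).+2.
  by rewrite cnt_mulr_in // c1.
have key : forall m j, j < m -> m < #|T| -> (c ^+ m) x = y -> (c ^+ j) x = z -> False.
  move=> m j hjm hmN em ej.
  apply: (core (x := x) (m := m) (j := j) (k := m) _ hjm (leqnn m) hmN hg).
    by rewrite ex porbit_perm.
  by rewrite em ej.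
move: hcase => /or3P [/andP [h1 h2]|/andP [h1 h2]|/andP [h1 h2]].
- apply: (key (py - px) (pz - px)); try lia.
    by rewrite ex iter_shift ey; congr ((c ^+ _) o); lia.
  by rewrite ex iter_shift ez; congr ((c ^+ _) o); lia.
- apply: (key (#|T| - px + py) (pz - px)); try lia.
    by rewrite ex iter_shift ey -(hN py); congr ((c ^+ _) o); lia.
  by rewrite ex iter_shift ez; congr ((c ^+ _) o); lia.
- apply: (key (#|T| - px + py) (#|T| - px + pz)); try lia.
    by rewrite ex iter_shift ey -(hN py); congr ((c ^+ _) o); lia.
  by rewrite ex iter_shift ez -(hN pz); congr ((c ^+ _) o); lia.
Qed.

Lemma patB (c sg : {perm T}) o x1 x2 y1 y2 p1 q1 p2 q2 :
  #|porbit c o| = #|T| ->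
  cnt sg + cnt (c * sg^-1) = (#|T|).+1 ->
  x1 = (c ^+ p1) o -> y1 = (c ^+ q1) o -> x2 = (c ^+ p2) o -> y2 = (c ^+ q2) o ->
  p1 < q1 -> q1 < p2 -> p2 < q2 -> q2 < #|T| ->
  x2 \in porbit sg x1 -> y2 \in porbit sg y1 -> y1 \notin porbit sg x1 -> False.
Proof.
move=> hfull hg e1 f1 e2 f2 h1 h2 h3 h4 x2in y2in ynot.
have inj i i' : i < #|T| -> i' < #|T| -> (c ^+ i) o = (c ^+ i') o -> i = i'.
  by rewrite -hfull; apply: it_inj.
have x12 : x1 != x2.
  apply/eqP; rewrite e1 e2 => /inj; move/(_ ltac:(lia) ltac:(lia)); lia.
have y12 : y1 != y2.
  apply/eqP; rewrite f1 f2 => /inj; move/(_ ltac:(lia) ltac:(lia)); lia.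
have c1 : cnt (sg * tperm x1 x2) = (cnt sg).+1.
  by apply: cnt_mulr_in x12; rewrite porbit_sym.
have eo : porbit sg y2 = porbit sg y1 by apply/eqP; rewrite eq_porbit_mem.
have avoid : forall i, (sg ^+ i) y2 != x1 /\ (sg ^+ i) y2 != x2.
  move=> i; split; apply/eqP => e.
    move: ynot; rewrite porbit_sym -eo; by rewrite -e mem_porbit.
  move: ynot; have -> : porbit sg x1 = porbit sg x2.
    by apply/eqP; rewrite eq_porbit_mem porbit_sym.
  by rewrite porbit_sym -eo -e mem_porbit.
have itq : forall i, ((sg * tperm x1 x2) ^+ i) y2 = (sg ^+ i) y2.
  elim=> [|i IH]; first by rewrite !expg0.
  rewrite expgSr permM IH permM.
  have -> : sg ((sg ^+ i) y2) = (sg ^+ i.+1) y2 by rewrite expgSr permM.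
  by have [a1 a2] := avoid i.+1; rewrite tpermD // eq_sym.
have c2 : cnt (sg * tperm x1 x2 * tperm y1 y2) = (cnt sg).+2.
  rewrite cnt_mulr_in ?c1 //.
  have : y1 \in porbit sg y2 by rewrite eo porbit_id.
  by case/porbitP => i ->; rewrite -itq mem_porbit.
apply: (core (x := x1) (m := p2 - p1) (j := q1 - p1) (k := q2 - p1) _ _ _ _ hg).
- by rewrite e1 porbit_perm.
- lia.
- lia.
- lia.
have -> : (c ^+ (p2 - p1)) x1 = x2 by rewrite e1 iter_shift e2; congr ((c ^+ _) o); lia.
have -> : (c ^+ (q1 - p1)) x1 = y1 by rewrite e1 iter_shift f1; congr ((c ^+ _) o); lia.
have -> : (c ^+ (q2 - p1)) x1 = y2 by rewrite e1 iter_shift f2; congr ((c ^+ _) o); lia.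
exact: c2.
Qed.

End Gen.

Lemma porbit_eq (T : finType) (s : {perm T}) x y : y \in porbit s x -> porbit s y = porbit s x.
Proof. by move=> h; apply/eqP; rewrite eq_porbit_mem. Qed.

Lemma porbit_step (T : finType) (s : {perm T}) x y : y \in porbit s x -> s y \in porbit s x.
Proof.
move=> h; rewrite -(porbit_eq h).
by have := mem_porbit s 1 y; rewrite expg1.
Qed.

Lemma ex_min n (Q : pred 'I_n) i0 : Q i0 ->
  exists j, Q j /\ forall l, Q l -> (j <= l)%N.
Proof.
move=> h; case: (arg_minnP (fun j : 'I_n => nat_of_ord j) h) => j Qj hj.
by exists j.
Qed.

Lemma ex_max n (Q : pred 'I_n) i0 : Q i0 ->
  exists j, Q j /\ forall l, Q l -> (l <= j)%N.
Proof.
move=> h; case: (arg_maxnP (fun j : 'I_n => nat_of_ord j) h) => j Qj hj.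
by exists j.
Qed.

Section BN.
Variables (n : nat) (P : {set {set 'I_n}}).
Hypothesis hP : partition P [set: 'I_n].

Lemma inB i : i \in pblock P i.
Proof. by case/and3P: hP => /eqP hc _ _; rewrite mem_pblock hc inE. Qed.

Lemma pblock_same i l : l \in pblock P i -> pblock P l = pblock P i.
Proof. by case/and3P: hP => _ ht _; apply: same_pblock. Qed.

Lemma bn_spec i :
  let B := pblock P i in let j := block_next P i in
  j \in B /\
  ((i < j /\ forall l, l \in B -> i < l -> j <= l) \/
   ((forall l, l \in B -> l <= i) /\ forall l, l \in B -> j <= l))%N.
Proof.
rewrite /block_next /=.
case: pickP => [j /andP [jB /andP [ij /forallP hj]] | none].
  split => //; left; split => // l lB il.
  by have := hj l; rewrite lB il.
have hle : forall l, l \in pblock P i -> (l <= i)%N.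
  move=> l lB; rewrite leqNgt; apply/negP => il.
  have [j [/andP [jB ij] hj]] := ex_min (Q := fun j => (j \in pblock P i) && (i < j)%N) (introT andP (conj lB il)).
  have := none j; rewrite jB ij /=; move/negP; apply.
  apply/forallP => k; apply/implyP => kB; apply/implyP => ik.
  by apply: hj; rewrite kB ik.
case: pickP => [j /andP [jB /forallP hj] | none2] /=.
  split => //; right; split => // l lB.
  by have := hj l; rewrite lB.
exfalso.
have [j [jB hj]] := ex_min (Q := fun j => j \in pblock P i) (inB i).
have := none2 j; rewrite jB /=; move/negP; apply.
by apply/forallP => k; apply/implyP => kB; apply: hj.
Qed.


Lemma bn_in i : block_next P i \in pblock P i.
Proof. by case: (bn_spec i). Qed.

Lemma bn_next l' l : l \in pblock P l' -> (l' < l)%N ->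
  (forall x, x \in pblock P l' -> (l' < x)%N -> (l <= x)%N) ->
  block_next P l' = l.
Proof.
move=> lB hl hmin; case: (bn_spec l') => jB [[h1 h2]|[h1 h2]].
  apply/val_inj/eqP; rewrite eqn_leq h2 //=; exact: hmin.
by have := h1 l lB; lia.
Qed.

Lemma bn_wrap l' m : (forall x, x \in pblock P l' -> (x <= l')%N) ->
  m \in pblock P l' -> (forall x, x \in pblock P l' -> (m <= x)%N) ->
  block_next P l' = m.
Proof.
move=> hmax mB hmin; case: (bn_spec l') => jB [[h1 h2]|[h1 h2]].
  by have := hmax _ jB; lia.
apply/val_inj/eqP; rewrite eqn_leq h2 //=; exact: hmin.
Qed.

Lemma bn_inj : injective (block_next P).
Proof.
move=> i i' e.
have Bi : pblock P (block_next P i) = pblock P i by apply: pblock_same; apply: bn_in.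
have Bi' : pblock P (block_next P i') = pblock P i' by apply: pblock_same; apply: bn_in.
have eB : pblock P i' = pblock P i by rewrite -Bi' -e Bi.
have i'B : i' \in pblock P i by rewrite -eB inB.
have iB' : i \in pblock P i' by rewrite eB inB.
case: (bn_spec i) => _ [[h1 h2]|[h1 h2]]; case: (bn_spec i') => _ [[h1' h2']|[h1' h2']].
- apply/val_inj/eqP; rewrite eqn_leq; apply/andP; split; rewrite leqNgt; apply/negP => h.
    by have := h2' i iB' h; rewrite -e; lia.
  by have := h2 i' i'B h; rewrite e; lia.
- by have := h2' i iB'; rewrite -e; lia.
- by have := h2 i' i'B; rewrite e; lia.
- apply/val_inj/eqP; rewrite eqn_leq; apply/andP; split.
    by apply: h1'.
  by apply: h1.
Qed.

Lemma pi_permE : pi_perm P =1 block_next P.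
Proof.
move=> i; rewrite /pi_perm /mkperm.
case: injectiveP => [H|H]; first by rewrite permE.
by exfalso; apply: H; apply: bn_inj.
Qed.

Lemma pi_in i k : ((pi_perm P) ^+ k) i \in pblock P i.
Proof.
elim: k => [|k IH]; first by rewrite expg0 perm1 inB.
rewrite expgSr permM pi_permE.
by rewrite -(pblock_same IH) bn_in.
Qed.

Lemma pi_orbit i : porbit (pi_perm P) i = pblock P i.
Proof.
apply/setP => l; apply/idP/idP.
  by case/porbitP => k ->; apply: pi_in.
move=> lB.
have [m [mB hm]] := ex_min (Q := fun j => j \in pblock P i) (inB i).
suff H : forall v (x : 'I_n), (x < v)%N -> x \in pblock P i -> x \in porbit (pi_perm P) m.
  have im : i \in porbit (pi_perm P) m by apply: (H n.+1); [apply: ltnW; apply: ltn_ord | apply: inB].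
  have := H n.+1 l (ltnW (ltn_ord l)) lB.
  by rewrite -(porbit_eq im).
elim=> [|v IH] x // xv xB.
case: (eqVneq x m) => [->|xm]; first exact: porbit_id.
have mx : (m < x)%N.
  have := hm x xB; rewrite leq_eqVlt => /orP [/eqP h|//].
  by case/eqP: xm; apply: val_inj.
have [x' [/andP [x'B x'x] hx']] := ex_max (Q := fun j => (j \in pblock P i) && (j < x)%N) (introT andP (conj mB mx)).
have bx : block_next P x' = x.
  apply: bn_next.
  - by rewrite (pblock_same x'B).
  - exact: x'x.
  - move=> y yB x'y; rewrite leqNgt; apply/negP => yx.
    have := hx' y; rewrite (pblock_same x'B) in yB; rewrite yB yx => /(_ isT); lia.
have := IH x' (leq_trans x'x (ltnSE xv)) x'B.
rewrite -bx -pi_permE; exact: porbit_step.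
Qed.

End BN.

Section Basic.
Variable n : nat.

Lemma deltaE (x : PM n) : delta n x = (~~ x.1, x.2).
Proof. by rewrite /delta permE. Qed.

Lemma lift_posE (p : {perm 'I_n}) (x : PM n) :
  lift_pos p x = if x.1 then x else (false, p x.2).
Proof. by rewrite /lift_pos permE. Qed.

Lemma lift_posVE (p : {perm 'I_n}) (x : PM n) :
  (lift_pos p)^-1 x = lift_pos p^-1 x.
Proof.
apply: (@perm_inj _ (lift_pos p)); rewrite permKV !lift_posE.
by case: x => [[] i] //=; rewrite permKV.
Qed.

Lemma cgdE (x : PM n) :
  cgd n x = if x.1 then (true, (gamma_I n)^-1 x.2) else (false, ordS x.2).
Proof.
rewrite /cgd /pcomp !permM lift_posVE !deltaE /gamma !lift_posE.
case: x => [[] i] /=; rewrite ?deltaE ?lift_posE //=.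
by rewrite /gamma_I permE.
Qed.

Lemma pdpdE (P : {set {set 'I_n}}) (x : PM n) :
  pdpd P x = if x.1 then (true, (pi_perm P)^-1 x.2) else (false, pi_perm P x.2).
Proof.
rewrite /pdpd /pcomp !permM lift_posVE !deltaE !lift_posE.
by case: x => [[] i] /=; rewrite ?deltaE ?lift_posE.
Qed.

Lemma cgd_side (x : PM n) : (cgd n x).1 = x.1.
Proof. by rewrite cgdE; case: x => [[] i]. Qed.

Lemma cgdV_side (x : PM n) : ((cgd n)^-1 x).1 = x.1.
Proof. by rewrite -{2}(permKV (cgd n) x) cgd_side. Qed.

Lemma card_PM : #|{: PM n}| = (2 * n)%N.
Proof. by rewrite card_prod card_bool card_ord. Qed.

End Basic.

Lemma not_trans_side n (hn : 0 < n) (s : {perm PM n}) :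
  (forall w, (s w).1 = w.1) ->
  ~~ [transitive <<[set s; cgd n]>>, on [set: PM n] | 'P].
Proof.
move=> hs; apply/negP => htr.
pose i0 : 'I_n := Ordinal hn.
have horb : orbit (perm_action (PM n)) <<[set s; cgd n]>> (false, i0) = [set: PM n] := atransP htr (false, i0) (in_setT _).
have : (true, i0) \in orbit 'P <<[set s; cgd n]>> (false, i0) by rewrite horb inE.
case/orbitP => g /gen_prodgP [k [c hc ->]]; rewrite /= ?apermE.
have H : forall w, ((\prod_(i < k) c i) w).1 = w.1.
  apply: (big_ind (fun g : {perm PM n} => forall w, (g w).1 = w.1)).
  - by move=> w; rewrite perm1.
  - by move=> a b ha hb w; rewrite permM hb ha.
  move=> i _; have := hc i; case/set2P => -> w; [exact: hs | exact: cgd_side].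
by move=> e; have := H (false, i0); rewrite e.
Qed.

Lemma porbit_eq2 (T : finType) (s : {perm T}) x y : y \in porbit s x -> porbit s y = porbit s x.
Proof. by move=> h; apply/eqP; rewrite eq_porbit_mem. Qed.

Lemma porbit_step2 (T : finType) (s : {perm T}) x : s x \in porbit s x.
Proof. by have := mem_porbit s 1 x; rewrite expg1. Qed.

Section Main.
Variable n : nat.
Hypothesis hn : (1 < n)%N.
Variable s : {perm PM n}.
Hypothesis hS : SNC s.

Let hn0 : (0 < n)%N. Proof. by apply: ltnW. Qed.

Lemma hS_tr : [transitive <<[set s; cgd n]>>, on [set: PM n] | 'P].
Proof. by case/and3P: hS. Qed.

Lemma hS_cnt : (cnt s + cnt (cgd n * s^-1) = 2 * n)%N.
Proof. by case/and3P: hS => _ /eqP. Qed.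

Lemma sdelta u : s (delta n (s u)) = delta n u.
Proof.
case/and3P: hS => _ _ /forallP /(_ (delta n u)) /andP [/eqP h _].
move: h; rewrite /pcomp !permM.
have -> : delta n (delta n u) = u by rewrite !deltaE; case: u => [b i] /=; rewrite negbK.
by [].
Qed.

Lemma sdelta2 w : s (delta n w) = delta n (s^-1 w).
Proof. by rewrite -{1}(permKV s w) sdelta. Qed.

Lemma delta_inv w : delta n (delta n w) = w.
Proof. by rewrite !deltaE; case: w => [b i] /=; rewrite negbK. Qed.

Lemma iter_delta i x : (s ^+ i) (delta n x) = delta n ((s^-1 ^+ i) x).
Proof.
elim: i => [|i IH]; first by rewrite !expg0 !perm1.
by rewrite !expgSr !permM IH sdelta2.
Qed.

Lemma orbit_delta x y : (delta n y \in porbit s (delta n x)) = (y \in porbit s x).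
Proof.
rewrite -(porbitV s x); apply/idP/idP.
  case/porbitP => i; rewrite iter_delta => e.
  by apply/porbitP; exists i; rewrite -(delta_inv y) e delta_inv.
by case/porbitP => i ->; rewrite -iter_delta mem_porbit.
Qed.

Definition thr (w : PM n) := through (porbit s w).

Lemma thr_delta w : thr (delta n w) = thr w.
Proof.
suff H : forall w, thr w -> thr (delta n w).
  by apply/idP/idP => [/H|/H//]; rewrite delta_inv.
move=> {}w /andP [/existsP [x /andP [xin x1]] /existsP [y /andP [yin y1]]].
apply/andP; split; apply/existsP.
  by exists (delta n y); rewrite orbit_delta yin deltaE /= y1.
by exists (delta n x); rewrite orbit_delta xin deltaE /=.
Qed.

Lemma nthr_side w : ~~ thr w -> forall y, y \in porbit s w -> y.1 = w.1.
Proof.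
move=> nt y yin; apply: contraNeq nt => ne.
apply/andP; split; apply/existsP.
- case: (boolP w.1) => h.
    by exists y; rewrite yin /=; move: ne; rewrite h; case: y.1.
  by exists w; rewrite porbit_id h.
- case: (boolP w.1) => h.
    by exists w; rewrite porbit_id h.
  by exists y; rewrite yin /=; move: ne; move/negbTE: h => ->; case: y.1.
Qed.

Definition V := [set k | thr (false, k)].

Lemma V_exists : exists k, k \in V.
Proof.
apply/existsP; apply: contraT => /existsPn H.
have hall : forall w, ~~ thr w.
  move=> [[] k]; last by have := H k; rewrite inE.
  have := H k; rewrite inE -thr_delta deltaE //.
have := not_trans_side hn0 (s := s); rewrite hS_tr => /(_ _) h; apply: h => w.
by apply: (nthr_side (hall w)); apply: porbit_step2.
Qed.

Definition rho := cgd n * s^-1.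

Lemma ex_uv : exists i j, (false, i) \in porbit rho (true, j).
Proof.
suff : [exists i, [exists j, (false, i) \in porbit rho (true, j)]].
  by case/existsP => i /existsP [j h]; exists i, j.
apply: contraT => /existsPn H.
have H' : forall i j, (false, i) \notin porbit rho (true, j).
  by move=> i j; have := H i; move/existsPn; apply.
have hr : forall w, (rho w).1 = w.1.
  move=> [[] k].
    case: (boolP (rho (true, k)).1) => // /negbTE h.
    have := H' (rho (true, k)).2 k; rewrite -h -surjective_pairing.
    by rewrite porbit_step2.
  case: (boolP (rho (false, k)).1) => // h.
  have := H' k (rho (false, k)).2; rewrite -h -surjective_pairing.
  by rewrite porbit_sym porbit_step2.
have hsv : forall w, (s^-1 w).1 = w.1.
  move=> w; have -> : s^-1 = (cgd n)^-1 * rho by rewrite /rho mulKg.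
  by rewrite permM hr cgdV_side.
have := not_trans_side hn0 (s := s); rewrite hS_tr => /(_ _) h; apply: h => w.
by rewrite -{2}(permK s w) hsv.
Qed.

Lemma ord_reach (f : {perm PM n}) (b : bool) :
  (forall k : 'I_n, f (b, k) = (b, ordS k)) ->
  forall k : 'I_n, (b, k) \in porbit f (b, Ordinal hn0).
Proof.
move=> hf k.
suff H : forall m (hm : (m < n)%N), (b, Ordinal hm) \in porbit f (b, Ordinal hn0).
  by have := H k (ltn_ord k); rewrite (_ : Ordinal (ltn_ord k) = k) //; apply: val_inj.
elim=> [|m IH] hm.
  by rewrite (_ : Ordinal hm = Ordinal hn0) ?porbit_id //; apply: val_inj.
have hm' : (m < n)%N by apply: ltnW.
have := porbit_step (IH hm'); rewrite hf.
by rewrite (_ : ordS (Ordinal hm') = Ordinal hm) //; apply: val_inj => /=; rewrite modn_small.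
Qed.

Lemma porbit_cgd (w : PM n) : porbit (cgd n) w = [set y | y.1 == w.1].
Proof.
apply/setP => y; rewrite inE; apply/idP/idP.
  case/porbitP => i ->; apply/eqP.
  elim: i => [|i IH]; first by rewrite expg0 perm1.
  by rewrite expgSr permM cgd_side.
move=> /eqP hy.
have key : forall b k k', (b, k') \in porbit (cgd n) (b, k).
  move=> b k k'; case: b.
    have hf : forall k : 'I_n, ((cgd n)^-1) (true, k) = (true, ordS k).
      move=> k0; apply: (@perm_inj _ (cgd n)); rewrite permKV cgdE /=.
      have e : gamma_I n k0 = ordS k0 by rewrite /gamma_I permE.
      by rewrite -e permK.
    have h1 := ord_reach hf k; have h2 := ord_reach hf k'.
    rewrite porbitV in h1 h2.
    rewrite (porbit_eq2 h1); exact: h2.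
  have hf : forall k : 'I_n, cgd n (false, k) = (false, ordS k) by move=> k0; rewrite cgdE.
  have h1 := ord_reach hf k; have h2 := ord_reach hf k'.
  rewrite (porbit_eq2 h1); exact: h2.
by rewrite (surjective_pairing y) (surjective_pairing w) hy key.
Qed.

Lemma cnt_cgd : cnt (cgd n) = 2%N.
Proof.
rewrite /cnt.
have -> : porbits (cgd n) = [set [set y : PM n | y.1 == false]; [set y : PM n | y.1 == true]].
  apply/setP => A; rewrite !inE; apply/imsetP/orP.
    by case=> w _ ->; rewrite porbit_cgd; case: w => [[] k]; [right|left].
  by case=> /eqP ->; [exists (false, Ordinal hn0) | exists (true, Ordinal hn0)]; rewrite // porbit_cgd.
rewrite cards2; case: eqP => //= e.
have : (false, Ordinal hn0) \in [set y : PM n | y.1 == false] by rewrite inE.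
by rewrite e inE.
Qed.

Section Cut.
Variables i0 j0 : 'I_n.
Hypothesis huv : (false, i0) \in porbit rho (true, j0).

Definition u0 : PM n := (false, i0).
Definition v0 : PM n := (true, j0).
Definition cc := tperm u0 v0 * cgd n.
Definition b0 : PM n := (false, Ordinal hn0).

Lemma ccE w : cc w = cgd n (tperm u0 v0 w).
Proof. by rewrite /cc permM. Qed.

Lemma cc_full : #|porbit cc b0| = #|{: PM n}|.
Proof.
have c1 : cnt cc = 1%N.
  have := cnt_mull (cgd n) u0 v0; rewrite cnt_cgd porbit_cgd inE /=.
  rewrite /cc; move=> e; simpl in e; rewrite ?doubleS ?double0 in e; have e2 : cnt (tperm u0 v0 * cgd n) + 2 = 1 + 2 := e. exact: (addIn e2).
have [A hA] : exists A, porbits cc = [set A].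
  by apply/cards1P; move: c1; rewrite /cnt => ->.
have all_in : forall w, porbit cc w = A.
  by move=> w; apply/set1P; rewrite -hA; apply: imset_f.
suff -> : porbit cc b0 = setT by rewrite cardsT.
apply/setP => w; rewrite inE (all_in b0) -(all_in w); exact: porbit_id.
Qed.

Lemma cc_geo : (cnt s + cnt (cc * s^-1) = #|{: PM n}|.+1)%N.
Proof.
have -> : cc * s^-1 = tperm u0 v0 * rho by rewrite /cc /rho -mulgA.
rewrite cnt_mull_in //; have := hS_cnt; rewrite card_PM -/rho; move=> h; by rewrite addnS h.
Qed.

Definition posP (k : 'I_n) : nat := if (k <= i0)%N then (k : nat) else (n + k)%N.

Lemma cc_pos (k : 'I_n) : k != i0 -> cc (false, k) = (false, ordS k).
Proof.
move=> ki; rewrite ccE tpermD ?cgdE //.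
  by rewrite /u0; apply/eqP => [[e]]; move: ki; rewrite e eqxx.
Qed.

Lemma cpos1 m (hm : (m < n)%N) : (m <= i0)%N -> (cc ^+ m) b0 = (false, Ordinal hm).
Proof.
elim: m hm => [|m IH] hm hmi.
  by rewrite expg0 perm1 /b0; congr (_, _); apply: val_inj.
have hm' : (m < n)%N by apply: ltnW.
have hmi' : (m <= i0)%N by apply: ltnW.
have ne : Ordinal hm' != i0.
  by apply/eqP => /(congr1 val) /= e; move: hmi; rewrite -e ltnn.
rewrite expgSr permM (IH hm' hmi') (cc_pos ne).
by congr (_, _); apply: val_inj => /=; rewrite modn_small.
Qed.

Lemma cc_per : (cc ^+ (2 * n)) b0 = b0.
Proof. by rewrite -card_PM -cc_full it_per. Qed.

Lemma cpos2 d (k : 'I_n) : (k : nat) = (n.-1 - d)%N -> (i0 < k)%N ->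
  (cc ^+ (n + k)) b0 = (false, k).
Proof.
elim: d k => [|d IH] k hk hik; rewrite -subn1 in hk.
  apply: (@perm_inj _ cc); rewrite -permM -expgSr cc_pos; last first.
    by apply/eqP => /(congr1 val) e; move: hik; rewrite e ltnn.
  have -> : (n + k).+1 = (2 * n)%N by rewrite hk; lia.
  rewrite cc_per /b0; congr (_, _); apply: val_inj => /=.
  by rewrite hk subn0 subn1 prednK // modnn.
have hk1 : (k.+1 < n)%N by lia.
have := IH (Ordinal hk1) ltac:(simpl; rewrite -subn1; lia) ltac:(simpl; lia).
move=> e; apply: (@perm_inj _ cc); rewrite -permM -expgSr cc_pos; last first.
  by apply/eqP => /(congr1 val) e'; move: hik; rewrite e' ltnn.
rewrite -addnS e; congr (_, _); apply: val_inj => /=.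
by rewrite modn_small.
Qed.

Lemma cpos k : (cc ^+ posP k) b0 = (false, k).
Proof.
rewrite /posP; case: ifP => h.
  by rewrite (cpos1 (ltn_ord k) h); congr (_, _); apply: val_inj.
apply: (@cpos2 (n.-1 - k)); first by have := ltn_ord k; lia.
by rewrite ltnNge h.
Qed.

Lemma posP_lt k : (posP k < #|{: PM n}|)%N.
Proof. rewrite card_PM /posP; have := ltn_ord k; have := ltn_ord i0; case: (leqP k i0); lia. Qed.

Lemma posP_mono (k l : 'I_n) : (k < l)%N -> (posP k < posP l)%N.
Proof. rewrite /posP; have := ltn_ord k; have := ltn_ord l; case: (leqP k i0); case: (leqP l i0); lia. Qed.

Lemma pos_uniq p k : (p < #|{: PM n}|)%N -> (cc ^+ p) b0 = (false, k) -> p = posP k.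
Proof.
move=> hp e; rewrite -cc_full in hp.
apply: (it_inj hp); first by rewrite cc_full posP_lt.
by rewrite e cpos.
Qed.

Lemma all_pos w : exists2 p, (p < #|{: PM n}|)%N & w = (cc ^+ p) b0.
Proof.
have := @it_sur _ cc b0 w (full_in _ cc_full); rewrite cc_full; case=> p hp e.
by exists p.
Qed.

Lemma neg_pos j : exists p, [/\ (p < #|{: PM n}|)%N, (cc ^+ p) b0 = (true, j),
  (i0 < p)%N & (p <= n + i0)%N].
Proof.
have [p hp e] := all_pos (true, j).
exists p; split => //.
  rewrite ltnNge; apply/negP => hpi.
  have hpn : (p < n)%N by have := ltn_ord i0; lia.
  by move: e; rewrite (cpos1 hpn hpi).
rewrite leqNgt; apply/negP => hpi.
have hk : (p - n < n)%N by move: hp; rewrite card_PM; lia.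
have := cpos (Ordinal hk); rewrite /posP /=.
have -> : ((p - n) <= i0)%N = false by lia.
have -> : (n + (p - n))%N = p by lia.
by rewrite -e.
Qed.

Lemma noA (k k' l : 'I_n) : s (false, k) = (false, k') ->
  (false, l) \in porbit s (false, k) -> l != k -> l != k' ->
  [|| (k < l)%N && (l < k')%N, (k' < k)%N && (k < l)%N | (l < k')%N && (k' < k)%N] ->
  False.
Proof.
move=> hs lin lk lk' hc.
apply: (patA cc_full cc_geo (esym (cpos k)) _ (esym (cpos l)) (posP_lt k) (posP_lt k') (posP_lt l) lin).
- by rewrite hs cpos.
- by apply/eqP => [[e]]; move: lk; rewrite e eqxx.
- by rewrite hs; apply/eqP => [[e]]; move: lk'; rewrite e eqxx.
case/or3P: hc => /andP [h1 h2].
- by rewrite (posP_mono h1) (posP_mono h2).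
- by rewrite (posP_mono h1) (posP_mono h2) orbT.
- by rewrite (posP_mono h1) (posP_mono h2) !orbT.
Qed.

Lemma noB (w1 w2 z1 z2 : PM n) p1 q1 p2 q2 :
  (cc ^+ p1) b0 = w1 -> (cc ^+ q1) b0 = z1 -> (cc ^+ p2) b0 = w2 -> (cc ^+ q2) b0 = z2 ->
  (p1 < q1)%N -> (q1 < p2)%N -> (p2 < q2)%N -> (q2 < #|{: PM n}|)%N ->
  w2 \in porbit s w1 -> z2 \in porbit s z1 -> z1 \notin porbit s w1 -> False.
Proof.
move=> e1 f1 e2 f2 h1 h2 h3 h4 i1 i2 i3.
exact: (patB cc_full cc_geo (esym e1) (esym f1) (esym e2) (esym f2) h1 h2 h3 h4 i1 i2 i3).
Qed.

Lemma succ_pos (k : 'I_n) : ~~ thr (false, k) ->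
  exists k' : 'I_n, [/\ s (false, k) = (false, k'),
    (false, k') \in porbit s (false, k) &
    (((k < k')%N /\ forall l : 'I_n, (false, l) \in porbit s (false, k) -> (k < l)%N -> (k' <= l)%N) \/
     ((forall l : 'I_n, (false, l) \in porbit s (false, k) -> (l <= k)%N) /\
      forall l : 'I_n, (false, l) \in porbit s (false, k) -> (k' <= l)%N))].
Proof.
move=> nt.
have yin := porbit_step2 s (false, k).
have y1 : (s (false, k)).1 = false by rewrite (nthr_side nt yin).
exists (s (false, k)).2.
have ey : s (false, k) = (false, (s (false, k)).2) by rewrite {1}(surjective_pairing (s (false, k))) y1.
split => //; first by rewrite -ey.
set k' := (s (false, k)).2 in ey *.
have fixk : k' = k -> forall l : 'I_n, (false, l) \in porbit s (false, k) -> l = k.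
  move=> e l lin; have h : s (false, k) = (false, k) by rewrite ey e.
  by case: (fix_orbit h lin).
case: (boolP [exists l : 'I_n, ((false, l) \in porbit s (false, k)) && (k < l)%N]).
  case/existsP => l /andP [lin kl]; left.
  have kk' : (k < k')%N.
    rewrite ltnNge; apply/negP => hkk.
    case: (eqVneq k' k) => [e|ne].
      by have := fixk e l lin => e'; move: kl; rewrite e' ltnn.
    have h : (k' < k)%N by rewrite ltn_neqAle hkk andbT.
    apply: (noA ey lin).
    + by apply/eqP => e; move: kl; rewrite e ltnn.
    + by apply/eqP => e; move: kl; rewrite e ltnNge (ltnW h).
    + by rewrite h kl orbT.
  split => // l' l'in kl'; rewrite leqNgt; apply/negP => l'k'.
  apply: (noA ey l'in).
  + by apply/eqP => e; move: kl'; rewrite e ltnn.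
  + by apply/eqP => e; move: l'k'; rewrite e ltnn.
  + by rewrite kl' l'k'.
move/existsPn => H.
have hle : forall l : 'I_n, (false, l) \in porbit s (false, k) -> (l <= k)%N.
  by move=> l lin; have := H l; rewrite lin /= -leqNgt.
right; split => // l lin; rewrite leqNgt; apply/negP => lk'.
have k'k : (k' <= k)%N by apply: hle; rewrite -ey.
case: (eqVneq k' k) => [e|ne].
  by have := fixk e l lin => e'; move: lk'; rewrite e' e ltnn.
have h : (k' < k)%N by rewrite ltn_neqAle k'k andbT.
apply: (noA ey lin).
+ by apply/eqP => e; move: lk'; rewrite e ltnNge (ltnW h).
+ by apply/eqP => e; move: lk'; rewrite e ltnn.
+ by rewrite lk' h !orbT.
Qed.

Lemma thr_orbit w y : y \in porbit s w -> thr y = thr w.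
Proof. by move=> h; rewrite /thr (porbit_eq2 h). Qed.

Lemma Vorb (x z : 'I_n) : (false, z) \in porbit s (false, x) -> (z \in V) = (x \in V).
Proof. by move=> h; rewrite !inE (thr_orbit h). Qed.

Definition R (x y : 'I_n) := ((x \in V) && (y \in V)) || ((false, y) \in porbit s (false, x)).

Lemma RV x y : x \in V -> R x y = (y \in V).
Proof.
move=> xV; rewrite /R xV /=; case: (boolP (y \in V)) => //= yV.
by apply/negP => h; move: yV; rewrite (Vorb h) xV.
Qed.

Lemma RnV x y : x \notin V -> R x y = ((false, y) \in porbit s (false, x)).
Proof. by move=> /negbTE xV; rewrite /R xV. Qed.

Lemma R_equiv : {in [set: 'I_n] & &, equivalence_rel R}.
Proof.
move=> x y z _ _ _; split; first by rewrite /R porbit_id orbT.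
case: (boolP (x \in V)) => xV.
  rewrite RV // => yV; by rewrite !RV.
rewrite RnV // => h.
have yV : y \notin V by rewrite (Vorb h).
by rewrite !RnV // (porbit_eq2 h).
Qed.

Definition Pc := equivalence_partition R [set: 'I_n].

Lemma hPc : partition Pc [set: 'I_n].
Proof. exact: equivalence_partitionP R_equiv. Qed.

Lemma pblockPc x y : (y \in pblock Pc x) = R x y.
Proof. by rewrite (pblock_equivalence_partition R_equiv) ?inE. Qed.

Lemma thr_neg k : k \in V -> exists j, (true, j) \in porbit s (false, k).
Proof.
rewrite inE => /andP [_ /existsP [x /andP [xin x1]]].
exists x.2; move: xin; rewrite [x in x \in _](surjective_pairing x).
by move: x1 => /eqP; rewrite eqb_id => ->.
Qed.

Lemma not_thr_neg k w : k \notin V -> w \in porbit s (false, k) -> w.1 = false.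
Proof. by rewrite inE => nt win; rewrite (nthr_side nt win). Qed.

Lemma cross_ii (a b c d : 'I_n) : (a < b)%N -> (b < c)%N -> (c < d)%N ->
  a \in V -> c \in V -> b \notin V -> (false, d) \in porbit s (false, b) -> False.
Proof.
move=> ab bc cd aV cV bV dB.
have [j1 x1in] := thr_neg aV.
have [j2 x2in] := thr_neg cV.
have [px1 [hp1 e1 l1 u1]] := neg_pos j1.
have [px2 [hp2 e2 l2 u2]] := neg_pos j2.
have ltN := posP_lt d.
case: (boolP ((b <= i0)%N && (i0 < d)%N)) => [/andP [bi id]|hbd].
  apply: (noB (cpos a) (cpos b) e1 (cpos d)) => //.
  - exact: posP_mono.
  - by rewrite /posP bi; lia.
  - by rewrite /posP (leqNgt d i0) id /=; lia.
  - by apply/negP => h; move: bV; rewrite (Vorb h) aV.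
have : (i0 < b)%N || (d <= i0)%N by move: hbd; rewrite negb_and -!ltnNge.
case/orP => h.
  apply: (noB e2 (cpos b) (cpos c) (cpos d)).
  - by rewrite /posP (leqNgt b i0) h /=; lia.
  - exact: posP_mono.
  - exact: posP_mono.
  - exact: ltN.
  - by rewrite porbit_sym.
  - exact: dB.
  - apply/negP => h'; move: bV; rewrite porbit_sym in x2in.
    by rewrite -(porbit_eq2 x2in) in h'; rewrite (Vorb h') cV.
apply: (noB (cpos b) (cpos c) (cpos d) e2).
- exact: posP_mono.
- exact: posP_mono.
- by rewrite /posP h; lia.
- exact: hp2.
- exact: dB.
- exact: x2in.
- by apply/negP => h'; move: bV; rewrite -(Vorb h') cV.
Qed.

Lemma cross_iii (a b c d : 'I_n) : (a < b)%N -> (b < c)%N -> (c < d)%N ->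
  a \notin V -> (false, c) \in porbit s (false, a) -> b \in V -> d \in V -> False.
Proof.
move=> ab bc cd aV cA bV dV.
have [j1 x1in] := thr_neg bV.
have [j2 x2in] := thr_neg dV.
have [px1 [hp1 e1 l1 u1]] := neg_pos j1.
have [px2 [hp2 e2 l2 u2]] := neg_pos j2.
have ltN := posP_lt d.
case: (boolP ((a <= i0)%N && (i0 < c)%N)) => [/andP [ai ic]|hac].
  apply: (noB (cpos a) e2 (cpos c) (cpos d)) => //.
  - by rewrite /posP ai; lia.
  - by rewrite /posP (leqNgt c i0) ic /=; lia.
  - exact: posP_mono.
  - by rewrite (porbit_eq2 x2in) porbit_id.
  - by apply/negP => h; have := not_thr_neg aV h.
have : (i0 < a)%N || (c <= i0)%N by move: hac; rewrite negb_and -!ltnNge.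
case/orP => h.
  apply: (noB e1 (cpos a) (cpos b) (cpos c)).
  - by rewrite /posP (leqNgt a i0) h /=; lia.
  - exact: posP_mono.
  - exact: posP_mono.
  - exact: posP_lt.
  - by rewrite porbit_sym.
  - exact: cA.
  - apply/negP => h'; rewrite porbit_sym in x1in.
    by rewrite -(porbit_eq2 x1in) in h'; move: aV; rewrite (Vorb h') bV.
apply: (noB (cpos a) (cpos b) (cpos c) e1).
- exact: posP_mono.
- exact: posP_mono.
- by rewrite /posP h; lia.
- exact: hp1.
- exact: cA.
- exact: x1in.
- by apply/negP => h'; move: aV; rewrite -(Vorb h') bV.
Qed.

Lemma NC_Pc : NC Pc.
Proof.
rewrite /NC hPc /=.
case/and3P: hPc => /eqP hcov htriv _.
apply/forallP => a; apply/forallP => b; apply/forallP => c; apply/forallP => d.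
apply/implyP => /and5P [ab bc cd eac ebd].
have cov x : x \in cover Pc by rewrite hcov inE.
rewrite eq_pblock // pblockPc in eac; rewrite eq_pblock // pblockPc in ebd.
rewrite eq_pblock // pblockPc.
case: (boolP (a \in V)) => aV.
  rewrite RV // in eac; rewrite RV //.
  case: (boolP (b \in V)) => // bV.
  rewrite RnV // in ebd.
  by exfalso; apply: (cross_ii ab bc cd aV eac bV ebd).
rewrite RnV // in eac; rewrite RnV //.
case: (boolP (b \in V)) => bV.
  rewrite RV // in ebd.
  by exfalso; apply: (cross_iii ab bc cd aV eac bV ebd).
rewrite RnV // in ebd.
apply/negPn/negP => bA.
apply: (noB (cpos a) (cpos b) (cpos c) (cpos d)) => //.
- exact: posP_mono.
- exact: posP_mono.
- exact: posP_mono.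
- exact: posP_lt.
Qed.

Lemma agree_pos k : k \notin V -> s (false, k) = (false, pi_perm Pc k).
Proof.
move=> kV; have nt : ~~ thr (false, k) by move: kV; rewrite inE.
have [k' [es k'in spec]] := succ_pos nt.
rewrite es (pi_permE hPc); congr (_, _); apply/esym.
case: spec => [[h1 h2]|[h1 h2]].
  apply: (bn_next hPc); rewrite ?pblockPc ?RnV //.
  by move=> x; rewrite pblockPc RnV //; apply: h2.
apply: (bn_wrap hPc); rewrite ?pblockPc ?RnV //.
  by move=> x; rewrite pblockPc RnV //; apply: h1.
by move=> x; rewrite pblockPc RnV //; apply: h2.
Qed.

Lemma agree w : ~~ thr w -> s w = pdpd Pc w.
Proof.
case: w => [[] k] nt; rewrite pdpdE /=; last first.
  by apply: agree_pos; rewrite inE.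
have ntk : ~~ thr (false, k).
  by rewrite -thr_delta deltaE.
have yin : s^-1 (false, k) \in porbit s (false, k).
  by rewrite -porbitV porbit_step2.
have y1 := nthr_side ntk yin.
set y := s^-1 (false, k) in yin y1.
have ey : y = (false, y.2) by rewrite {1}(surjective_pairing y) y1.
have mV : y.2 \notin V.
  by rewrite inE -ey (thr_orbit yin).
have e2 := agree_pos mV; rewrite -ey /y permKV in e2.
have -> : (true, k) = delta n (false, k) by rewrite deltaE.
rewrite sdelta2 -/y ey deltaE /=; congr (_, _).
by case: e2 => ->; rewrite permK.
Qed.

Lemma orbit_agree w : ~~ thr w -> porbit (pdpd Pc) w = porbit s w.
Proof.
move=> nt.
have it : forall i, ((pdpd Pc) ^+ i) w = (s ^+ i) w.
  elim=> [|i IH]; first by rewrite !expg0.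
  have nti : ~~ thr ((s ^+ i) w) by rewrite (thr_orbit (mem_porbit s i w)).
  by rewrite !expgSr (permM ((pdpd Pc) ^+ i)) (permM (s ^+ i)) IH agree.
apply/setP => y; apply/porbitP/porbitP => [[i ->]|[i ->]]; exists i; by rewrite it.
Qed.

Lemma thr_sub w : thr w -> porbit s w \subset VdV V.
Proof.
move=> t; apply/subsetP => y yin; rewrite inE inE.
case: y yin => [[] k] yin /=.
  by rewrite -thr_delta deltaE /= (thr_orbit yin).
by rewrite (thr_orbit yin).
Qed.

Lemma nthr_nsub w : ~~ thr w -> ~~ (porbit s w \subset VdV V).
Proof.
move=> nt; apply/negP => /subsetP /(_ w (porbit_id _ _)); rewrite !inE.
case: w nt => [[] k] nt /=.
  by rewrite -thr_delta deltaE /= (negbTE nt).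
by rewrite (negbTE nt).
Qed.

Lemma V_in_Pc : V \in Pc.
Proof.
have [k0 k0V] := V_exists.
have -> : V = pblock Pc k0.
  by apply/setP => y; rewrite pblockPc RV.
case/and3P: hPc => /eqP hcov _ _.
by apply: pblock_mem; rewrite hcov inE.
Qed.

Lemma SNC_piV_Pc : SNC_piV Pc V s.
Proof.
apply/and3P; split => //.
  apply/forallP => C; apply/implyP => /imsetP [w _ ->].
  case: (boolP (thr w)) => t; first by rewrite thr_sub ?orbT.
  apply/orP; left; apply/andP; split.
    by rewrite -orbit_agree //; apply: imset_f.
  by apply/forallP => x; apply/implyP => xin; rewrite agree // (thr_orbit xin).
apply/forallP => C; apply/implyP => /imsetP [w _ ->].
apply/implyP => sub; apply: contraT => nt.
by move: (nthr_nsub nt); rewrite sub.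
Qed.

End Cut.

Lemma existence : exists (P : {set {set 'I_n}}) (V : {set 'I_n}),
  [/\ NC P, V \in P & SNC_piV P V s].
Proof.
have [i0 [j0 huv]] := ex_uv.
exists Pc, V; split.
- exact: NC_Pc huv.
- exact: V_in_Pc.
- exact: SNC_piV_Pc huv.
Qed.

End Main.

Section Uniq.
Variable n : nat.
Variable s : {perm PM n}.
Variables (P : {set {set 'I_n}}) (V : {set 'I_n}).
Hypothesis hNC : NC P.
Hypothesis hV : V \in P.
Hypothesis hpi : SNC_piV P V s.

Let hP : partition P [set: 'I_n].
Proof. by case/andP: hNC. Qed.

Lemma pdpd_orbit k y :
  (y \in porbit (pdpd P) (false, k)) = (y.1 == false) && (y.2 \in pblock P k).
Proof.
have it : forall i, ((pdpd P) ^+ i) (false, k) = (false, ((pi_perm P) ^+ i) k).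
  elim=> [|i IH]; first by rewrite !expg0 !perm1.
  by rewrite !expgSr (permM ((pdpd P) ^+ i)) IH pdpdE /= permM.
rewrite -(pi_orbit hP); apply/porbitP/andP => [[i ->]|[/eqP y1 /porbitP [i e]]].
  by rewrite it /= mem_porbit.
by exists i; rewrite it -e -y1 -surjective_pairing.
Qed.

Lemma hP_cov k : k \in cover P.
Proof. by case/and3P: hP => /eqP -> _ _; rewrite inE. Qed.

Lemma cyc_case k :
  (porbit s (false, k) = porbit (pdpd P) (false, k)) \/
  (porbit s (false, k) \subset VdV V /\ through (porbit s (false, k))).
Proof.
case/and3P: hpi => _ /forallP /(_ (porbit s (false, k))) H2 /forallP /(_ (porbit s (false, k))) H3.
have Cin : porbit s (false, k) \in porbits s by apply: imset_f.
rewrite Cin /= in H2 H3.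
case/orP: H2 => [/andP [/imsetP [w _ ew] _]|sub].
  left; rewrite ew; apply: esym; apply: porbit_eq2.
  by rewrite -ew porbit_id.
by right; split => //; move/implyP: H3; apply.
Qed.

Lemma U1 k : (k \in V) = through (porbit s (false, k)).
Proof.
have hkV : k \in V -> pblock P k = V.
  by move=> kV; case/and3P: hP => _ ht _; apply: def_pblock.
case: (cyc_case k) => [e|[sub t]]; last first.
  rewrite t; move/subsetP: sub => /(_ (false, k) (porbit_id _ _)).
  by rewrite !inE.
have nt : ~~ through (porbit s (false, k)).
  rewrite e; apply/negP => /andP [_ /existsP [x /andP [xin x1]]].
  by move: xin; rewrite pdpd_orbit x1.
rewrite (negbTE nt); apply/negP => kV.
case/and3P: hpi => _ _ /forallP /(_ (porbit s (false, k))) H3.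
have Cin : porbit s (false, k) \in porbits s by apply: imset_f.
rewrite Cin /= in H3; move/implyP: H3 => H3.
have : porbit s (false, k) \subset VdV V.
  apply/subsetP => y; rewrite e pdpd_orbit => /andP [_ yB].
  by rewrite inE -(hkV kV).
by move/H3; rewrite (negbTE nt).
Qed.

Lemma U2 k : k \notin V -> pblock P k = [set l | (false, l) \in porbit s (false, k)].
Proof.
move=> kV; case: (cyc_case k) => [e|[sub t]]; last by move: kV; rewrite U1 t.
by apply/setP => l; rewrite inE e pdpd_orbit /=.
Qed.

End Uniq.

Lemma part_eq n (P : {set {set 'I_n}}) : partition P [set: 'I_n] ->
  P = [set pblock P k | k in [set: 'I_n]].
Proof.
case/and3P => /eqP hcov ht h0; apply/setP => B; apply/idP/imsetP.
  move=> BP; have : B != set0 by apply: contraNneq h0 => <-.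
  case/set0Pn => k kB; exists k; first by rewrite inE.
  by rewrite (def_pblock ht BP kB).
by case=> k _ ->; apply: pblock_mem; rewrite hcov inE.
Qed.

Lemma uniqueness n (s : {perm PM n}) P1 P2 V1 V2 :
  NC P1 -> V1 \in P1 -> NC P2 -> V2 \in P2 ->
  SNC_piV P1 V1 s -> SNC_piV P2 V2 s -> P1 = P2 /\ V1 = V2.
Proof.
move=> n1 v1 n2 v2 h1 h2.
have eV : V1 = V2.
  by apply/setP => k; rewrite (U1 n1 v1 h1) (U1 n2 v2 h2).
split => //.
have hP1 : partition P1 [set: 'I_n] by case/andP: n1.
have hP2 : partition P2 [set: 'I_n] by case/andP: n2.
rewrite (part_eq hP1) (part_eq hP2); apply: eq_imset => k.
case: (boolP (k \in V1)) => kV.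
  case/and3P: hP1 => _ ht1 _; case/and3P: hP2 => _ ht2 _.
  rewrite (def_pblock ht1 v1 kV) (def_pblock ht2 v2) //; by rewrite -eV.
rewrite (U2 n1 v1 h1 kV) (U2 n2 v2 h2) //; by rewrite -eV.
Qed.

End Aux.

Theorem lemma6p8 (n : nat) (hn : 2 <= n) :
  (forall s : {perm bool * 'I_n},
     SNC s <-> exists (P : {set {set 'I_n}}) (V : {set 'I_n}),
                 [/\ NC P, V \in P & SNC_piV P V s]) /\
  (forall (P1 P2 : {set {set 'I_n}}) (V1 V2 : {set 'I_n}) (s : {perm bool * 'I_n}),
     NC P1 -> V1 \in P1 -> NC P2 -> V2 \in P2 ->
     SNC_piV P1 V1 s -> SNC_piV P2 V2 s -> P1 = P2 /\ V1 = V2).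
Proof.
split.
  move=> s; split; first by move=> hS; exact: (Aux.existence hn hS).
  by case=> P [V [_ _ /and3P [h _ _]]].
move=> P1 P2 V1 V2 s n1 v1 n2 v2 h1 h2.
exact: (Aux.uniqueness n1 v1 n2 v2 h1 h2).
Qed.
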